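(* Let $G=A\star_C B$ be an amalgamated free product and let $g=x_{-r}x_{-r+1}\cdots x_0\cdots x_{r-1}x_r$ be a reduced word in $G$ with $r\ge1$, where $x_i\in A\setminus C$ for all $i\equiv r\pmod 2$ and $x_i\in B\setminus C$ otherwise. Suppose $x_{-r}$ and $x_r$ are both $2$-RF rel $C$ (in $A$), and $x_0$ is $n$-RTF rel $C$ (in its factor) for some $2\le n\le\infty$. Then $g\in G\setminus B$ is $n$-RF rel $B$.
   Context: For a group $G$, subgroup $D$, and $2\le n\le\infty$: $a\in G\setminus D$ is $n$-RF rel $D$ if $a^{e_1}d_1\cdots a^{e_k}d_k\ne\mathrm{id}$ for all $k\ge1$, $e_i\in\{\pm1\}$, $d_i\in D$ such that $d_i\ne\mathrm{id}$ whenever $e_i=-e_{i+1}$ (indices mod $k$), and fewer than $n$ of the $e_i$ are $+1$ and fewer than $n$ are $-1$. $a\in G\setminus D$ is $n$-RTF rel $D$ if $ad_1ad_2\cdots ad_k\ne\mathrm{id}$ for all $d_i\in D$ and $1\le k<n$. *)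

(* Defs.v *)
From Stdlib Require Import List Arith Lia.
Import ListNotations.
Set Implicit Arguments.

Record group := Group {
  gcar :> Type;
  gmul : gcar -> gcar -> gcar;
  ginv : gcar -> gcar;
  gone : gcar;
  gmulA : forall x y z, gmul x (gmul y z) = gmul (gmul x y) z;
  gmul1 : forall x, gmul gone x = x;
  gmulV : forall x, gmul (ginv x) x = gone
}.

Arguments gmul {g}. Arguments ginv {g}. Arguments gone {g}.

Definition is_subgroup {G : group} (H : G -> Prop) : Prop :=
  H gone /\ (forall x y, H x -> H y -> H (gmul x y)) /\ (forall x, H x -> H (ginv x)).

Definition gprod {G : group} (s : list G) : G := fold_right gmul gone s.

(** G is the (internal) amalgamated free product A *_C B:
    A, B, C subgroups, C = A ∩ B, G generated by A ∪ B, and every nonempty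
    reduced word (alternating between A\C and B\C) is nontrivial. *)
Definition reduced_word {G : group} (A B C : G -> Prop) (s : list G) : Prop :=
  (forall i, i < length s ->
     (A (nth i s gone) /\ ~ C (nth i s gone)) \/ (B (nth i s gone) /\ ~ C (nth i s gone))) /\
  (forall i, S i < length s ->
     (A (nth i s gone) <-> ~ A (nth (S i) s gone))).

Definition amalgamated_free_product {G : group} (A B C : G -> Prop) : Prop :=
  is_subgroup A /\ is_subgroup B /\ is_subgroup C /\
  (forall x, C x <-> (A x /\ B x)) /\
  (forall g : G, exists s : list G, (forall x, In x s -> A x \/ B x) /\ g = gprod s) /\
  (forall s : list G, s <> [] -> reduced_word A B C s -> gprod s <> gone).

(** Extended naturals: [None] stands for infinity. *)
Definition lt_ext (k : nat) (n : option nat) : Prop :=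
  match n with None => True | Some m => k < m end.
Definition le_ext (k : nat) (n : option nat) : Prop :=
  match n with None => True | Some m => k <= m end.

Definition gpow_sign {G : group} (a : G) (e : bool) : G := if e then a else ginv a.

(** a^{e_1} d_1 ... a^{e_k} d_k, where l = [(e_1,d_1); ...; (e_k,d_k)],
    e_i = true meaning +1 and false meaning -1. *)
Definition rf_word {G : group} (a : G) (l : list (bool * G)) : G :=
  fold_right (fun p acc => gmul (gmul (gpow_sign a (fst p)) (snd p)) acc) gone l.

Definition n_RF {G : group} (n : option nat) (D : G -> Prop) (a : G) : Prop :=
  ~ D a /\
  forall l : list (bool * G),
    1 <= length l ->
    (forall i, i < length l -> D (snd (nth i l (true, gone)))) ->
    (forall i, i < length l ->
        fst (nth i l (true, gone)) = negb (fst (nth ((S i) mod length l) l (true, gone))) ->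
        snd (nth i l (true, gone)) <> gone) ->
    lt_ext (length (filter (fun p => fst p) l)) n ->
    lt_ext (length (filter (fun p => negb (fst p)) l)) n ->
    rf_word a l <> gone.

Definition n_RTF {G : group} (n : option nat) (D : G -> Prop) (a : G) : Prop :=
  ~ D a /\
  forall ds : list G,
    1 <= length ds -> lt_ext (length ds) n ->
    (forall d, In d ds -> D d) ->
    fold_right (fun d acc => gmul (gmul a d) acc) gone ds <> gone.

(* Main.v *)
Require Import Defs.
From Stdlib Require Import List Arith Lia Bool Classical.
Import ListNotations.
Local Infix "**" := gmul (at level 40, left associativity).
Arguments gmulA {g}. Arguments gmul1 {g}. Arguments gmulV {g}.

Lemma mulgV {G : group} (x : G) : x ** ginv x = gone.
Proof.
  rewrite <- (gmul1 (x ** ginv x)).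
  rewrite <- (gmulV (ginv x)) at 1.
  rewrite <- gmulA. rewrite (gmulA (ginv x) x). rewrite gmulV, gmul1. apply gmulV.
Qed.

Lemma mulg1 {G : group} (x : G) : x ** gone = x.
Proof. rewrite <- (gmulV x), gmulA, mulgV, gmul1. reflexivity. Qed.

Lemma mulKg {G : group} (x y : G) : ginv x ** (x ** y) = y.
Proof. rewrite gmulA, gmulV, gmul1; reflexivity. Qed.

Lemma mulVKg {G : group} (x y : G) : x ** (ginv x ** y) = y.
Proof. rewrite gmulA, mulgV, gmul1; reflexivity. Qed.

Lemma mulgK {G : group} (x y : G) : y ** x ** ginv x = y.
Proof. rewrite <- gmulA, mulgV, mulg1; reflexivity. Qed.

Lemma mulgVK {G : group} (x y : G) : y ** ginv x ** x = y.
Proof. rewrite <- gmulA, gmulV, mulg1; reflexivity. Qed.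

Lemma inv_uniq {G : group} (x y : G) : x ** y = gone -> y = ginv x.
Proof. intro H. rewrite <- (mulKg x y), H, mulg1. reflexivity. Qed.

Lemma invgK {G : group} (x : G) : ginv (ginv x) = x.
Proof. symmetry. apply inv_uniq. apply gmulV. Qed.

Lemma invMg {G : group} (x y : G) : ginv (x ** y) = ginv y ** ginv x.
Proof. symmetry. apply inv_uniq. rewrite gmulA, <- (gmulA x y), mulgV, mulg1, mulgV. reflexivity. Qed.

Lemma inv1 {G : group} : ginv (@gone G) = gone.
Proof. symmetry. apply inv_uniq. apply gmul1. Qed.

Lemma mul_eq1_comm {G : group} (x y : G) : x ** y = gone -> y ** x = gone.
Proof. intro H. apply inv_uniq in H. subst. apply gmulV. Qed.

Lemma mulg_cancel_l {G : group} (a x y : G) : a ** x = a ** y -> x = y.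
Proof. intro H. rewrite <- (mulKg a x), H, mulKg. reflexivity. Qed.

Lemma gprod_app {G : group} (s t : list G) : gprod (s ++ t) = gprod s ** gprod t.
Proof. induction s; simpl. rewrite gmul1; auto. rewrite IHs, gmulA; auto. Qed.

Lemma eq_mul_inv {G : group} (x y : G) : x ** ginv y = gone -> x = y.
Proof. intro H. apply mul_eq1_comm, inv_uniq in H. rewrite H, invgK. auto. Qed.
Definition side {G : group} (A B : G -> Prop) (s : bool) : G -> Prop := if s then A else B.
Definition letter {G : group} (A B C : G -> Prop) (s : bool) (y : G) : Prop :=
  side A B s y /\ ~ C y.

Inductive red {G : group} (A B C : G -> Prop) : bool -> bool -> list G -> Prop :=
| red1 : forall s y, letter A B C s y -> red A B C s s [y]
| redc : forall s t y l, letter A B C s y -> red A B C (negb s) t l -> red A B C s t (y :: l).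

Lemma side_sub {G : group} (A B C : G -> Prop) s :
  amalgamated_free_product A B C -> is_subgroup (side A B s).
Proof. intros (HA & HB & _). destruct s; simpl; auto. Qed.

Lemma C_side {G : group} (A B C : G -> Prop) s y :
  amalgamated_free_product A B C -> C y -> side A B s y.
Proof. intros (HA & HB & HC & HI & _) Hy. apply HI in Hy. destruct s; simpl; tauto. Qed.

Lemma letter_inv {G : group} (A B C : G -> Prop) s y :
  amalgamated_free_product A B C -> letter A B C s y -> letter A B C s (ginv y).
Proof.
  intros H [H1 H2]. pose proof (side_sub A B C s H) as (_ & _ & Hi).
  destruct H as (_ & _ & (_ & _ & HCi) & _).
  split. auto. intro Hc. apply H2. rewrite <- (invgK y). auto.
Qed.

Lemma red_app {G : group} (A B C : G -> Prop) s t u l1 l2 :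
  red A B C s t l1 -> red A B C (negb t) u l2 -> red A B C s u (l1 ++ l2).
Proof.
  intro H. induction H; intro H2; simpl.
  - constructor; auto.
  - constructor; auto.
Qed.

Lemma red_hd {G : group} (A B C : G -> Prop) s t l :
  red A B C s t l -> exists z l', l = z :: l' /\ letter A B C s z.
Proof. intro H; destruct H; eauto. Qed.

Lemma alt_lemma {G : group} (A B C : G -> Prop) s y z :
  amalgamated_free_product A B C ->
  letter A B C s y -> letter A B C (negb s) z -> (A y <-> ~ A z).
Proof.
  intros (_ & _ & _ & HI & _) [Hy Hy'] [Hz Hz'].
  destruct s; simpl in *.
  - split; auto. intros _ Hz2. apply Hz'. apply HI. auto.
  - split. intros Hy2 _. apply Hy'. apply HI; auto. intro Hn. exfalso. auto.
Qed.

Lemma red_reduced {G : group} (A B C : G -> Prop) s t l :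
  amalgamated_free_product A B C -> red A B C s t l -> reduced_word A B C l.
Proof.
  intros Hafp H. induction H.
  - split.
    + intros i Hi. simpl in Hi. destruct i; [|lia]. simpl. destruct H as [H1 H2].
      destruct s; simpl in H1; auto.
    + intros i Hi. simpl in Hi. lia.
  - destruct IHred as [IH1 IH2]. split.
    + intros i Hi. destruct i.
      * simpl. destruct H as [H1 H2]. destruct s; simpl in H1; auto.
      * simpl. apply IH1. simpl in Hi. lia.
    + intros i Hi. destruct i.
      * destruct (red_hd _ _ _ _ _ _ H0) as (z & l' & -> & Hz). simpl.
        eapply alt_lemma; eauto.
      * simpl. apply IH2. simpl in Hi. lia.
Qed.

Lemma red_neq1 {G : group} (A B C : G -> Prop) s t l :
  amalgamated_free_product A B C -> red A B C s t l -> gprod l <> gone.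
Proof.
  intros Hafp H. pose proof Hafp as (_ & _ & _ & _ & _ & Hn).
  apply Hn. destruct H; discriminate. eapply red_reduced; eauto.
Qed.
Definition Qs {G : group} (A B C : G -> Prop) s (t : G) : Prop :=
  exists l, red A B C s s l /\ gprod l = t.
Definition Qp {G : group} (A B C : G -> Prop) s (t : G) : Prop := C t \/ Qs A B C s t.

Lemma Qs_step {G : group} (A B C : G -> Prop) s t y z :
  Qs A B C (negb s) t -> letter A B C s y -> letter A B C s z -> Qs A B C s (y ** t ** z).
Proof.
  intros (l & Hl & <-) Hy Hz. exists (y :: l ++ [z]). split.
  - constructor; auto. eapply red_app; eauto. rewrite negb_involutive. constructor; auto.
  - simpl. rewrite gprod_app. simpl. rewrite mulg1, !gmulA. auto.
Qed.

Lemma Qs_letter {G : group} (A B C : G -> Prop) s y :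
  letter A B C s y -> Qs A B C s y.
Proof. intro H. exists [y]. split. constructor; auto. simpl. apply mulg1. Qed.

Lemma Qp_step {G : group} (A B C : G -> Prop) s t y z :
  amalgamated_free_product A B C ->
  Qp A B C (negb s) t -> letter A B C s y -> letter A B C s z -> Qp A B C s (y ** t ** z).
Proof.
  intros Hafp [Ht|Ht] Hy Hz.
  - destruct (classic (C (y ** t ** z))) as [Hc|Hc]. left; auto.
    right. apply Qs_letter. split; auto.
    pose proof (side_sub A B C s Hafp) as (_ & Hm & _).
    apply Hm. apply Hm. apply Hy. apply (C_side A B C); auto. apply Hz.
  - right. apply Qs_step; auto.
Qed.

Lemma RF2_conj {G : group} (C : G -> Prop) (a c : G) :
  is_subgroup C -> n_RF (Some 2) C a -> C c -> c <> gone ->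
  ~ C (a ** c ** ginv a) /\ ~ C (ginv a ** c ** a).
Proof.
  intros (HC1 & HCm & HCi) [_ H] Hc Hc1. split; intro Ht.
  - set (t := a ** c ** ginv a) in *.
    apply (H [(true, c); (false, ginv t)]); simpl.
    + lia.
    + intros i Hi. destruct i as [|[|i]]; simpl; auto. lia.
    + intros i Hi. destruct i as [|[|i]]; simpl; auto.
      * intros _ Heq. apply (f_equal ginv) in Heq. rewrite invgK, inv1 in Heq.
        apply Hc1. unfold t in Heq. apply eq_mul_inv in Heq.
        apply (mulg_cancel_l a). rewrite mulg1; auto.
      * lia.
    + lia.
    + lia.
    + rewrite mulg1, gmulA. unfold t. apply mulgV.
  - set (t := ginv a ** c ** a) in *.
    apply (H [(false, c); (true, ginv t)]); simpl.
    + lia.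
    + intros i Hi. destruct i as [|[|i]]; simpl; auto. lia.
    + intros i Hi. destruct i as [|[|i]]; simpl; auto.
      * intros _ Heq. apply (f_equal ginv) in Heq. rewrite invgK, inv1 in Heq.
        apply Hc1. unfold t in Heq.
        assert (E : c = a ** (ginv a ** c ** a) ** ginv a) by (rewrite gmulA, mulgK, mulVKg; auto).
        rewrite E, Heq, mulg1, mulgV. auto.
      * lia.
    + lia.
    + lia.
    + rewrite mulg1, gmulA. unfold t. apply mulgV.
Qed.
Definition fR {G : group} (a : G) (ds : list G) : G :=
  fold_right (fun d acc => gmul (gmul a d) acc) gone ds.
Definition hR {G : group} (a : G) (ds : list G) : G :=
  fold_right (fun d acc => gmul (gmul d a) acc) gone ds.

Lemma hR_cons {G : group} (a c : G) L : hR a (c :: L) = c ** fR a L ** a.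
Proof.
  revert c. induction L as [|c' L IH]; intro c; simpl.
  - rewrite !mulg1. auto.
  - change (hR a (c' :: L)) with (fold_right (fun d acc => gmul (gmul d a) acc) gone (c' :: L)) in IH.
    simpl in IH. rewrite IH. rewrite !gmulA. auto.
Qed.

Lemma fR_snoc {G : group} (a c : G) L : fR a (L ++ [c]) = fR a L ** (a ** c).
Proof. induction L; simpl. rewrite mulg1, gmul1; auto. unfold fR in *; rewrite IHL, gmulA; auto. Qed.

Lemma hR_snoc {G : group} (a c : G) L : hR a (L ++ [c]) = hR a L ** (c ** a).
Proof. induction L; simpl. rewrite mulg1, gmul1; auto. unfold hR in *; rewrite IHL, gmulA; auto. Qed.

Lemma inv_fR {G : group} (a : G) ds : ginv (fR (ginv a) ds) = hR a (rev (map ginv ds)).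
Proof.
  induction ds as [|d ds IH]; simpl. apply inv1.
  rewrite hR_snoc, <- IH. unfold fR. rewrite !invMg, invgK, gmulA. auto.
Qed.

Lemma RTF_inv {G : group} (C : G -> Prop) n (a : G) :
  is_subgroup C -> n_RTF n C a -> n_RTF n C (ginv a).
Proof.
  intros (HC1 & HCm & HCi) [Ha H]. split.
  - intro Hc. apply Ha. rewrite <- (invgK a). auto.
  - intros ds Hl Hn Hds Heq.
    change (fR (ginv a) ds = gone) in Heq.
    apply (f_equal ginv) in Heq. rewrite inv1, inv_fR in Heq.
    destruct (rev (map ginv ds)) as [|c L] eqn:EL.
    + apply (f_equal (@length _)) in EL. rewrite length_rev, length_map in EL. simpl in EL. lia.
    + assert (HinL : forall d, In d (c :: L) -> C d).
      { intros d Hd. rewrite <- EL in Hd. apply in_rev in Hd. apply in_map_iff in Hd.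
        destruct Hd as (d' & <- & Hd'). auto. }
      assert (Hlen : length (L ++ [c]) = length ds).
      { apply (f_equal (@length _)) in EL. rewrite length_rev, length_map in EL. simpl in EL.
        rewrite length_app. simpl. lia. }
      apply (H (L ++ [c])).
      * lia.
      * rewrite Hlen; auto.
      * intros d Hd. apply in_app_or in Hd. destruct Hd as [Hd|[Hd|[]]]; apply HinL; simpl; auto.
      * change (fR a (L ++ [c]) = gone). rewrite fR_snoc. rewrite hR_cons in Heq.
        rewrite gmulA. apply mul_eq1_comm. rewrite !gmulA in *. auto.
Qed.
Fixpoint Pr {G : group} (F : nat -> G) (m len : nat) : G :=
  match len with 0 => gone | S l => F m ** Pr F (S m) l end.
Fixpoint cnt (E : nat -> bool) (s : bool) (m len : nat) : nat :=
  match len with 0 => 0 | S l => (if Bool.eqb (E m) s then 1 else 0) + cnt E s (S m) l end.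

Lemma lt_ext_mono k k' n : lt_ext k n -> k' <= k -> lt_ext k' n.
Proof. destruct n; simpl; auto. lia. Qed.

Lemma fR_side {G : group} (A B C : G -> Prop) X a ds :
  amalgamated_free_product A B C -> side A B X a -> (forall d, In d ds -> C d) ->
  side A B X (fR a ds).
Proof.
  intros Hafp Ha Hds. pose proof (side_sub A B C X Hafp) as (H1 & Hm & _).
  induction ds as [|d ds IH]; simpl; auto.
  apply Hm. apply Hm; auto. apply (C_side A B C); auto. simpl in Hds; auto.
  apply IH. intros; apply Hds; simpl; auto.
Qed.

Lemma scan {G : group} (A B C : G -> Prop) (X : bool) (a : bool -> G) n
  (E : nat -> bool) (J : nat -> G) :
  amalgamated_free_product A B C ->
  (forall e, side A B X (a e)) ->
  (forall e, n_RTF n C (a e)) ->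
  (forall i, C (J i) \/ Qs A B C (negb X) (J i)) ->
  (forall i, E i <> E (S i) -> Qs A B C (negb X) (J i)) ->
  forall len p e ds, 1 <= len -> E p = e -> (forall d, In d ds -> C d) ->
  Qs A B C (negb X) (J (p + len - 1)) ->
  (forall s, lt_ext ((if Bool.eqb s e then length ds else 0) + cnt E s p len) n) ->
  exists w, red A B C X (negb X) w /\ gprod w = fR (a e) ds ** Pr (fun i => a (E i) ** J i) p len.
Proof.
  intros Hafp Ha Hrtf H1 H2.
  pose proof Hafp as (_ & _ & HCs & _).
  pose proof HCs as (HC1 & HCm & HCi).
  intro len; induction len as [|len IH]; intros p e ds Hlen Hpe Hds HQ Hcnt; [lia|].
  simpl Pr.
  destruct (classic (Qs A B C (negb X) (J p))) as [HJ|HJ].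
  - set (R := fR (a e) ds ** a e).
    assert (HR : letter A B C X R).
    { split.
      - pose proof (side_sub A B C X Hafp) as (_ & Hm & _). apply Hm; auto.
        apply (fR_side A B C); auto.
      - intro HRc. destruct (Hrtf e) as [_ Hr]. apply (Hr (ds ++ [ginv R])).
        + rewrite length_app; simpl; lia.
        + eapply lt_ext_mono. apply (Hcnt e). rewrite eqb_reflx. simpl.
          rewrite Hpe, eqb_reflx. rewrite length_app. simpl. lia.
        + intros d Hd. apply in_app_or in Hd. destruct Hd as [Hd|[<-|[]]]; auto.
        + change (fR (a e) (ds ++ [ginv R]) = gone). rewrite fR_snoc, gmulA. apply mulgV. }
    destruct HJ as (lp & Hlp & Hglp).
    destruct len as [|len'].
    + exists ([R] ++ lp). split.
      * eapply red_app. constructor; eauto. auto.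
      * simpl. rewrite Hglp. unfold R. rewrite Hpe, mulg1, !gmulA. auto.
    + destruct (IH (S p) (E (S p)) []) as (w' & Hw' & Hgw'); auto.
      * lia.
      * simpl; tauto.
      * replace (S p + S len' - 1) with (p + S (S len') - 1) by lia. auto.
      * intro s. eapply lt_ext_mono. apply (Hcnt s).
        change (cnt E s p (S (S len'))) with ((if Bool.eqb (E p) s then 1 else 0) + cnt E s (S p) (S len')).
        destruct (Bool.eqb s (E (S p))); destruct (Bool.eqb s e); destruct (Bool.eqb (E p) s); simpl; lia.
      * exists ([R] ++ lp ++ w'). split.
        -- rewrite app_assoc. eapply red_app. eapply red_app. constructor; eauto. eauto.
           rewrite negb_involutive; auto.
        -- rewrite !gprod_app. rewrite Hgw', Hglp. simpl. unfold R.
           rewrite Hpe, mulg1, gmul1, !gmulA. auto.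
  - assert (HCp : C (J p)) by (destruct (H1 p); tauto).
    assert (HE : E p = E (S p)).
    { destruct (E p) eqn:E1, (E (S p)) eqn:E2; auto; exfalso; apply HJ, H2; congruence. }
    destruct len as [|len'].
    + exfalso. apply HJ. replace p with (p + 1 - 1) by lia. auto.
    + destruct (IH (S p) e (ds ++ [J p])) as (w' & Hw' & Hgw'); auto.
      * lia.
      * congruence.
      * intros d Hd. apply in_app_or in Hd. destruct Hd as [Hd|[<-|[]]]; auto.
      * replace (S p + S len' - 1) with (p + S (S len') - 1) by lia. auto.
      * intro s. eapply lt_ext_mono. apply (Hcnt s).
        change (cnt E s p (S (S len'))) with ((if Bool.eqb (E p) s then 1 else 0) + cnt E s (S p) (S len')).
        rewrite length_app. simpl. rewrite Hpe.
        destruct (Bool.eqb s e) eqn:Hse.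
        -- apply eqb_prop in Hse. subst. rewrite eqb_reflx. lia.
        -- destruct (Bool.eqb e s) eqn:Hes; [|lia]. apply eqb_prop in Hes. subst. rewrite eqb_reflx in Hse. discriminate.
      * exists w'. split; auto. rewrite Hgw', fR_snoc, Hpe, !gmulA. auto.
Qed.
Lemma Pr_app {G : group} (F : nat -> G) m a b : Pr F m (a + b) = Pr F m a ** Pr F (m + a) b.
Proof.
  revert m. induction a; intro m; simpl. rewrite gmul1, Nat.add_0_r; auto.
  rewrite IHa, gmulA. replace (S m + a) with (m + S a) by lia. auto.
Qed.

Lemma Pr_ext {G : group} (F F' : nat -> G) m len :
  (forall i, m <= i -> i < m + len -> F i = F' i) -> Pr F m len = Pr F' m len.
Proof.
  revert m. induction len; intros m H; simpl; auto.
  rewrite H by lia. rewrite IHlen; auto. intros; apply H; lia.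
Qed.

Lemma Pr_shift {G : group} (F : nat -> G) m d len :
  Pr F (m + d) len = Pr (fun i => F (i + d)) m len.
Proof. revert m. induction len; intro m; simpl; auto. rewrite <- IHlen. auto. Qed.

Lemma cnt_snoc E s m len :
  cnt E s m (S len) = cnt E s m len + (if Bool.eqb (E (m + len)) s then 1 else 0).
Proof.
  revert m. induction len; intro m. simpl. rewrite !Nat.add_0_r. reflexivity.
  change (cnt E s m (S (S len))) with ((if Bool.eqb (E m) s then 1 else 0) + cnt E s (S m) (S len)).
  rewrite IHlen. replace (S m + len) with (m + S len) by lia. simpl.
  destruct (Bool.eqb (E m) s), (Bool.eqb (E (m + S len)) s); lia.
Qed.

Lemma cnt_shift E s m d len : cnt E s (m + d) len = cnt (fun i => E (i + d)) s m len.
Proof. revert m. induction len; intro m; simpl; auto. rewrite <- IHlen. auto. Qed.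

Lemma cnt_periodic E s k : (forall i, E (i + k) = E i) -> forall m, cnt E s m k = cnt E s 0 k.
Proof.
  intros HE m. induction m; auto. rewrite <- IHm.
  pose proof (cnt_snoc E s m k) as H1. simpl in H1. rewrite HE in H1.
  destruct (Bool.eqb (E m) s); lia.
Qed.

Lemma cnt_const E e m len : (forall i, m <= i -> i < m + len -> E i = e) -> cnt E e m len = len.
Proof.
  revert m. induction len; intros m H; simpl; auto.
  rewrite H by lia. rewrite eqb_reflx. rewrite IHlen; auto. intros; apply H; lia.
Qed.

Lemma Pr_const {G : group} (a : bool -> G) E (J : nat -> G) e m len :
  (forall i, m <= i -> i < m + len -> E i = e) ->
  Pr (fun i => a (E i) ** J i) m len = fR (a e) (map J (seq m len)).
Proof.
  revert m. induction len; intros m H; simpl; auto.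
  rewrite H by lia. rewrite IHlen; auto. intros; apply H; lia.
Qed.

Lemma core {G : group} (A B C : G -> Prop) (X : bool) (a : bool -> G) n
  (E : nat -> bool) (J : nat -> G) k :
  amalgamated_free_product A B C ->
  (forall e, side A B X (a e)) ->
  (forall e, n_RTF n C (a e)) ->
  (forall i, C (J i) \/ Qs A B C (negb X) (J i)) ->
  (forall i, E i <> E (S i) -> Qs A B C (negb X) (J i)) ->
  1 <= k ->
  (forall i, E (i + k) = E i) -> (forall i, J (i + k) = J i) ->
  (forall s, lt_ext (cnt E s 0 k) n) ->
  Pr (fun i => a (E i) ** J i) 0 k <> gone.
Proof.
  intros Hafp Ha Hrtf H1 H2 Hk HEp HJp Hcnt.
  destruct (classic (exists j, j < k /\ Qs A B C (negb X) (J j))) as [(j & Hj & HQ)|Hno].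
  - set (E' := fun i => E (i + S j)). set (J' := fun i => J (i + S j)).
    destruct (scan A B C X a n E' J' Hafp Ha Hrtf) with (len := k) (p := 0) (e := E' 0) (ds := @nil G)
      as (w & Hw & Hgw); auto.
    + intro i. apply H1.
    + intro i. apply H2.
    + simpl; tauto.
    + unfold J'. replace (0 + k - 1 + S j) with (j + k) by lia. rewrite HJp. auto.
    + intro s. simpl. unfold E'. rewrite <- cnt_shift, cnt_periodic; auto. destruct (Bool.eqb _ _); apply Hcnt.
    + intro HP. apply (red_neq1 A B C _ _ w Hafp Hw). rewrite Hgw. simpl. rewrite gmul1.
      unfold E', J'. rewrite <- (Pr_shift (fun i => a (E i) ** J i) 0 (S j) k).
      simpl plus.
      replace k with ((k - S j) + S j) by lia. rewrite Pr_app.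
      replace (S j + (k - S j)) with (0 + k) by lia.
      rewrite (Pr_shift _ 0 k). rewrite (Pr_ext (fun i => a (E (i + k)) ** J (i + k)) (fun i => a (E i) ** J i)).
      2:{ intros; rewrite HEp, HJp; auto. }
      apply mul_eq1_comm. rewrite <- Pr_app. replace (S j + (k - S j)) with k by lia. auto.
  - assert (HnQ : forall i, i < k -> ~ Qs A B C (negb X) (J i)) by (intros i Hi HQ; apply Hno; eauto).
    assert (HE : forall i, i < k -> E i = E 0).
    { induction i; intro Hi; auto. rewrite <- IHi by lia.
      destruct (E i) eqn:E1, (E (S i)) eqn:E2; auto; exfalso; apply (HnQ i); [lia| |lia|]; apply H2; congruence. }
    rewrite (Pr_const a E J (E 0)) by (intros; apply HE; lia).
    destruct (Hrtf (E 0)) as [_ Hr]. apply Hr.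
    + rewrite length_map, length_seq. auto.
    + rewrite length_map, length_seq. rewrite <- (cnt_const E (E 0) 0 k) by (intros; apply HE; lia). auto.
    + intros d Hd. apply in_map_iff in Hd. destruct Hd as (i & <- & Hi). apply in_seq in Hi.
      destruct (H1 i); auto. exfalso; apply (HnQ i); auto; lia.
Qed.
Definition Lf {G : group} (x : nat -> G) j := gprod (map x (seq 0 j)).
Definition Rt {G : group} (r : nat) (x : nat -> G) j := gprod (map x (seq (2 * r + 1 - j) j)).

Lemma Lf_S {G : group} (x : nat -> G) j : Lf x (S j) = Lf x j ** x j.
Proof. unfold Lf. rewrite seq_S, map_app, gprod_app. simpl. rewrite mulg1. auto. Qed.

Lemma Rt_S {G : group} r (x : nat -> G) j : j < 2 * r + 1 -> Rt r x (S j) = x (2 * r - j) ** Rt r x j.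
Proof.
  intro H. unfold Rt. replace (2 * r + 1 - S j) with (2 * r - j) by lia. rewrite <- cons_seq.
  replace (S (2 * r - j)) with (2 * r + 1 - j) by lia. reflexivity.
Qed.

Lemma g_eq {G : group} r (x : nat -> G) :
  gprod (map x (seq 0 (S (2 * r)))) = Lf x r ** x r ** Rt r x r.
Proof.
  unfold Lf, Rt. replace (S (2 * r)) with (r + S r) by lia. rewrite seq_app, map_app, gprod_app.
  replace (2 * r + 1 - r) with (S r) by lia. rewrite <- cons_seq. simpl. rewrite gmulA. auto.
Qed.

Lemma ev_S j : Nat.even (S j) = negb (Nat.even j).
Proof. rewrite Nat.even_succ, Nat.negb_even. auto. Qed.

Lemma ev_sub r j : j <= 2 * r -> Nat.even (2 * r - j) = Nat.even j.
Proof. intro H. rewrite Nat.even_sub by auto. rewrite Nat.even_even. destruct (Nat.even j); auto. Qed.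

Lemma J_pp {G : group} (A B C : G -> Prop) r (x : nat -> G) b :
  amalgamated_free_product A B C ->
  (forall i, i <= 2 * r -> letter A B C (Nat.even i) (x i)) -> B b ->
  forall j, j <= r -> Qp A B C (negb (Nat.even j)) (Rt r x j ** b ** Lf x j).
Proof.
  intros Hafp Hl Hb. induction j; intro Hj.
  - unfold Rt, Lf. simpl. rewrite gmul1, mulg1.
    destruct (classic (C b)); [left; auto|right; apply Qs_letter; split; auto].
  - rewrite Rt_S, Lf_S by lia. rewrite ev_S, negb_involutive.
    replace (x (2 * r - j) ** Rt r x j ** b ** (Lf x j ** x j)) with
      (x (2 * r - j) ** (Rt r x j ** b ** Lf x j) ** x j) by (rewrite !gmulA; auto).
    apply Qp_step; auto. apply IHj; lia.
    rewrite <- (ev_sub r j) by lia. apply Hl; lia. apply Hl; lia.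
Qed.

Lemma J_mm {G : group} (A B C : G -> Prop) r (x : nat -> G) b :
  amalgamated_free_product A B C ->
  (forall i, i <= 2 * r -> letter A B C (Nat.even i) (x i)) -> B b ->
  forall j, j <= r -> Qp A B C (negb (Nat.even j)) (ginv (Lf x j) ** b ** ginv (Rt r x j)).
Proof.
  intros Hafp Hl Hb. induction j; intro Hj.
  - unfold Rt, Lf. simpl. rewrite inv1, gmul1, mulg1.
    destruct (classic (C b)); [left; auto|right; apply Qs_letter; split; auto].
  - rewrite Rt_S, Lf_S by lia. rewrite ev_S, negb_involutive. rewrite !invMg.
    replace (ginv (x j) ** ginv (Lf x j) ** b ** (ginv (Rt r x j) ** ginv (x (2 * r - j)))) with
      (ginv (x j) ** (ginv (Lf x j) ** b ** ginv (Rt r x j)) ** ginv (x (2 * r - j))) by (rewrite !gmulA; auto).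
    apply Qp_step; auto. apply IHj; lia.
    apply letter_inv; auto. apply Hl; lia.
    apply letter_inv; auto. rewrite <- (ev_sub r j) by lia. apply Hl; lia.
Qed.

Lemma J_pm {G : group} (A B C : G -> Prop) r (x : nat -> G) b :
  amalgamated_free_product A B C ->
  (forall i, i <= 2 * r -> letter A B C (Nat.even i) (x i)) -> B b -> b <> gone ->
  n_RF (Some 2) C (x (2 * r)) ->
  forall j, 1 <= j -> j <= r -> Qs A B C (negb (Nat.even j)) (Rt r x j ** b ** ginv (Rt r x j)).
Proof.
  intros Hafp Hl Hb Hb1 Hrf. pose proof Hafp as (_ & _ & HCs & _).
  induction j; intros Hj1 Hj; [lia|].
  destruct j as [|j].
  - rewrite Rt_S by lia. unfold Rt. simpl. rewrite !mulg1. rewrite Nat.sub_0_r.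
    assert (Hx : letter A B C true (x (2 * r))).
    { replace true with (Nat.even (2 * r)) by apply Nat.even_even. apply Hl; lia. }
    destruct (classic (C b)) as [Hc|Hc].
    + apply Qs_letter. split.
      * pose proof (side_sub A B C true Hafp) as (_ & Hm & Hi). simpl in *.
        apply Hm. apply Hm. apply Hx. apply (C_side A B C true); auto. apply Hi, Hx.
      * apply (RF2_conj C); auto.
    + exists [x (2 * r); b; ginv (x (2 * r))]. split.
      * constructor; auto. constructor. split; auto. constructor. apply letter_inv; auto.
      * simpl. rewrite mulg1, !gmulA. auto.
  - rewrite Rt_S by lia. rewrite ev_S, negb_involutive. rewrite !invMg.
    replace (x (2 * r - S j) ** Rt r x (S j) ** b ** (ginv (Rt r x (S j)) ** ginv (x (2 * r - S j)))) with
      (x (2 * r - S j) ** (Rt r x (S j) ** b ** ginv (Rt r x (S j))) ** ginv (x (2 * r - S j))) by (rewrite !gmulA; auto).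
    assert (Hx : letter A B C (Nat.even (S j)) (x (2 * r - S j))).
    { rewrite <- (ev_sub r (S j)) by lia. apply Hl; lia. }
    apply Qs_step; auto. apply IHj; lia. apply letter_inv; auto.
Qed.

Lemma J_mp {G : group} (A B C : G -> Prop) r (x : nat -> G) b :
  amalgamated_free_product A B C ->
  (forall i, i <= 2 * r -> letter A B C (Nat.even i) (x i)) -> B b -> b <> gone ->
  n_RF (Some 2) C (x 0) ->
  forall j, 1 <= j -> j <= r -> Qs A B C (negb (Nat.even j)) (ginv (Lf x j) ** b ** Lf x j).
Proof.
  intros Hafp Hl Hb Hb1 Hrf. pose proof Hafp as (_ & _ & HCs & _).
  induction j; intros Hj1 Hj; [lia|].
  destruct j as [|j].
  - rewrite Lf_S. unfold Lf. simpl. rewrite !gmul1.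
    assert (Hx : letter A B C true (x 0)) by (apply (Hl 0); lia).
    destruct (classic (C b)) as [Hc|Hc].
    + apply Qs_letter. split.
      * pose proof (side_sub A B C true Hafp) as (_ & Hm & Hi). simpl in *.
        apply Hm. apply Hm. apply Hi, Hx. apply (C_side A B C true); auto. apply Hx.
      * apply (RF2_conj C); auto.
    + exists [ginv (x 0); b; x 0]. split.
      * constructor; auto. apply letter_inv; auto. constructor. split; auto. constructor. auto.
      * simpl. rewrite mulg1, !gmulA. auto.
  - rewrite Lf_S. rewrite ev_S, negb_involutive. rewrite !invMg.
    replace (ginv (x (S j)) ** ginv (Lf x (S j)) ** b ** (Lf x (S j) ** x (S j))) with
      (ginv (x (S j)) ** (ginv (Lf x (S j)) ** b ** Lf x (S j)) ** x (S j)) by (rewrite !gmulA; auto).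
    assert (Hx : letter A B C (Nat.even (S j)) (x (S j))) by (apply Hl; lia).
    apply Qs_step; auto. apply IHj; lia. apply letter_inv; auto.
Qed.
Lemma cnt_ext E E' s m len :
  (forall i, m <= i -> i < m + len -> E i = E' i) -> cnt E s m len = cnt E' s m len.
Proof.
  revert m. induction len; intros m H; simpl; auto.
  rewrite H by lia. rewrite IHlen; auto. intros; apply H; lia.
Qed.

Lemma Pr_list {G : group} (f : bool * G -> G) l d :
  Pr (fun i => f (nth i l d)) 0 (length l) = fold_right (fun p acc => f p ** acc) gone l.
Proof.
  induction l as [|h t IH]; simpl; auto. f_equal. rewrite <- IH.
  change 1 with (0 + 1). rewrite Pr_shift. apply Pr_ext. intros i _ _.
  rewrite Nat.add_1_r. auto.
Qed.

Lemma cnt_list {G : group} (l : list (bool * G)) d s :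
  cnt (fun i => fst (nth i l d)) s 0 (length l) = length (filter (fun p => Bool.eqb (fst p) s) l).
Proof.
  induction l as [|h t IH]; simpl; auto.
  change 1 with (0 + 1). rewrite cnt_shift.
  rewrite (cnt_ext _ (fun i => fst (nth i t d))).
  2:{ intros i _ _. rewrite Nat.add_1_r. auto. }
  rewrite IH. destruct (Bool.eqb (fst h) s); simpl; auto.
Qed.

Lemma mod_periodic i k : k <> 0 -> (i + k) mod k = i mod k.
Proof.
  intro Hk. rewrite Nat.Div0.add_mod, Nat.Div0.mod_same, Nat.add_0_r, Nat.Div0.mod_mod. auto.
Qed.

Lemma main_rf {G : group} (A B C : G -> Prop) (r : nat) (x : nat -> G) (n : option nat) :
  amalgamated_free_product A B C ->
  1 <= r ->
  (forall i, i <= 2 * r -> letter A B C (Nat.even i) (x i)) ->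
  n_RF (Some 2) C (x 0) ->
  n_RF (Some 2) C (x (2 * r)) ->
  n_RTF n C (x r) ->
  forall l : list (bool * G),
    1 <= length l ->
    (forall i, i < length l -> B (snd (nth i l (true, gone)))) ->
    (forall i, i < length l ->
        fst (nth i l (true, gone)) = negb (fst (nth ((S i) mod length l) l (true, gone))) ->
        snd (nth i l (true, gone)) <> gone) ->
    lt_ext (length (filter (fun p => fst p) l)) n ->
    lt_ext (length (filter (fun p => negb (fst p)) l)) n ->
    rf_word (gprod (map x (seq 0 (S (2 * r))))) l <> gone.
Proof.
  intros Hafp Hr Hl Hrf0 Hrf2 Hrtf l Hk HB Hne Hc1 Hc2.
  pose proof Hafp as (_ & _ & HCs & _).
  set (g := gprod (map x (seq 0 (S (2 * r))))).
  set (k := length l) in *.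
  assert (Hk0 : k <> 0) by lia.
  set (d0 := (true, @gone G)).
  set (E := fun i => fst (nth (i mod k) l d0)).
  set (Bv := fun i => snd (nth (i mod k) l d0)).
  set (head := fun e : bool => if e then Lf x r else ginv (Rt r x r)).
  set (tail := fun e : bool => if e then Rt r x r else ginv (Lf x r)).
  set (a := fun e : bool => gpow_sign (x r) e).
  set (J := fun i => tail (E i) ** Bv i ** head (E (S i))).
  set (X := Nat.even r).
  assert (Hsign : forall e, gpow_sign g e = head e ** a e ** tail e).
  { intro e. unfold g. rewrite g_eq. destruct e; simpl; auto.
    rewrite !invMg, gmulA. auto. }
  assert (HY : forall j, j = r -> negb (Nat.even j) = negb X) by (intros; subst; auto).
  assert (Hjunc : forall i, (C (J i) \/ Qs A B C (negb X) (J i)) /\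
                           (E i <> E (S i) -> Qs A B C (negb X) (J i))).
  { intro i.
    assert (Him : i mod k < k) by (apply Nat.mod_upper_bound; auto).
    assert (HBi : B (Bv i)) by (apply HB; auto).
    assert (HSi : (S i) mod k = (S (i mod k)) mod k).
    { replace (S (i mod k)) with (i mod k + 1) by lia. rewrite Nat.Div0.add_mod_idemp_l. f_equal; lia. }
    assert (Hne' : E i <> E (S i) -> Bv i <> gone).
    { intro H. apply Hne; auto. unfold E, d0 in H. rewrite HSi in H.
      destruct (fst (nth (i mod k) l (true, gone))), (fst (nth (S (i mod k) mod k) l (true, gone))); simpl; congruence. }
    unfold J. destruct (E i) eqn:E1, (E (S i)) eqn:E2; simpl.
    - rewrite <- (HY r) by auto. split; [|congruence]. apply (J_pp A B C r x); auto.
    - rewrite <- (HY r) by auto. assert (Hq : Qs A B C (negb (Nat.even r)) (Rt r x r ** Bv i ** ginv (Rt r x r))).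
      { apply (J_pm A B C r x); auto; apply Hne'; congruence. }
      split; auto. 
    - rewrite <- (HY r) by auto. assert (Hq : Qs A B C (negb (Nat.even r)) (ginv (Lf x r) ** Bv i ** Lf x r)).
      { apply (J_mp A B C r x); auto; apply Hne'; congruence. }
      split; auto.
    - rewrite <- (HY r) by auto. split; [|congruence]. apply (J_mm A B C r x); auto. }
  assert (HEp : forall i, E (i + k) = E i) by (intro i; unfold E; rewrite mod_periodic; auto).
  assert (HBp : forall i, Bv (i + k) = Bv i) by (intro i; unfold Bv; rewrite mod_periodic; auto).
  assert (HJp : forall i, J (i + k) = J i).
  { intro i. unfold J. rewrite HEp, HBp. change (S (i + k)) with (S i + k). rewrite HEp. auto. }
  assert (Hcore : Pr (fun i => a (E i) ** J i) 0 k <> gone).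
  { apply (core A B C X a n E J k); auto.
    - intro e. pose proof (side_sub A B C X Hafp) as (_ & _ & Hi).
      assert (Hx : side A B X (x r)) by (apply (Hl r); lia).
      destruct e; simpl; auto.
    - intro e. destruct e; simpl; auto. apply RTF_inv; auto.
    - intro i. apply Hjunc.
    - intro i. apply Hjunc.
    - intro s. rewrite (cnt_ext _ (fun i => fst (nth i l d0))).
      2:{ intros i _ Hi. unfold E. rewrite Nat.mod_small; auto. }
      unfold k. rewrite cnt_list. destruct s.
      + rewrite (filter_ext _ (fun p => fst p)); auto. intros [[] ?]; auto.
      + rewrite (filter_ext _ (fun p => negb (fst p))); auto. }
  assert (Htele : forall len m, Pr (fun i => gpow_sign g (E i) ** Bv i) m len ** head (E (m + len))
                              = head (E m) ** Pr (fun i => a (E i) ** J i) m len).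
  { induction len; intro m; simpl.
    - rewrite Nat.add_0_r, gmul1, mulg1. auto.
    - rewrite <- gmulA. replace (m + S len) with (S m + len) by lia. rewrite IHlen.
      rewrite Hsign. unfold J. rewrite !gmulA. auto. }
  assert (Hrf : rf_word g l = Pr (fun i => gpow_sign g (E i) ** Bv i) 0 k).
  { unfold rf_word. rewrite <- (Pr_list (fun p => gpow_sign g (fst p) ** snd p) l d0).
    apply Pr_ext. intros i _ Hi. unfold E, Bv. rewrite Nat.mod_small; auto. }
  intro Hw. apply Hcore. rewrite Hrf in Hw.
  pose proof (Htele k 0) as Ht. rewrite Hw, gmul1 in Ht. simpl in Ht.
  change (E k) with (E (0 + k)) in Ht. rewrite HEp in Ht.
  apply (mulg_cancel_l (head (E 0))). rewrite mulg1. auto.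
Qed.

Theorem lemma5p25 (G : group) (A B C : G -> Prop) (r : nat) (x : nat -> G)
  (n : option nat) :
  amalgamated_free_product A B C ->
  1 <= r ->
  (forall i, i <= 2 * r -> Nat.Even i -> A (x i) /\ ~ C (x i)) ->
  (forall i, i <= 2 * r -> Nat.Odd i -> B (x i) /\ ~ C (x i)) ->
  n_RF (Some 2) C (x 0) ->
  n_RF (Some 2) C (x (2 * r)) ->
  le_ext 2 n ->
  n_RTF n C (x r) ->
  let g := gprod (map x (seq 0 (S (2 * r)))) in
  ~ B g /\ n_RF n B g.
Proof.
  intros Hafp Hr HA HB Hrf0 Hrf2 Hn2 Hrtf g.
  assert (Hl : forall i, i <= 2 * r -> letter A B C (Nat.even i) (x i)).
  { intros i Hi. destruct (Nat.Even_or_Odd i) as [He|Ho].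
    - rewrite (proj2 (Nat.even_spec i) He). apply HA; auto.
    - assert (Nat.even i = false) as ->.
      { rewrite <- Nat.negb_odd, (proj2 (Nat.odd_spec i) Ho). auto. }
      apply HB; auto. }
  pose proof (main_rf A B C r x n Hafp Hr Hl Hrf0 Hrf2 Hrtf) as Hmain.
  assert (HnB : ~ B g).
  { intro Hg. apply (Hmain [(true, ginv g)]); simpl.
    - lia.
    - intros i Hi. destruct i; [|lia]. simpl. pose proof Hafp as (_ & (_ & _ & Hi') & _). auto.
    - intros i Hi. destruct i; [|lia]. simpl. intro H. simpl in H. discriminate.
    - destruct n as [m|]; simpl in *; auto; lia.
    - destruct n as [m|]; simpl in *; auto; lia.
    - rewrite mulg1. apply mulgV. }
  split; auto. split; auto.
Qed.
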